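(* Let $F$ be a field of characteristic zero, $G$ a group, $H$ an abelian group, $\beta$ a skew-symmetric bicharacter on $H$, $C$ an $H$-graded $\beta$-commutative algebra generating the variety of all $H$-graded $\beta$-commutative algebras, and $R$ any $G$-graded algebra. Let $\mathbf g=(g_1,\dots,g_n)\in G^n$, $\mathbf h=(h_1,\dots,h_n)\in H^n$ and let $f\in T_{G\times H}(R\otimes C)\cap P_{\mathbf g\times\mathbf h}$. Then there exists $f_0\in P_{\mathbf g}\cap T_G(R)$ such that $f=\phi_{\mathbf h}(f_0)$.
   Context: $H$ is written additively; $\beta:H\times H\to F^*$ satisfies $\beta(g+h,k)=\beta(g,k)\beta(h,k)$, $\beta(g,h+k)=\beta(g,h)\beta(g,k)$, $\beta(g,h)=\beta(h,g)^{-1}$. For homogeneous $a\in C_h,b\in C_k$, $[a,b]_\beta=ab-\beta(h,k)ba$; $C$ is $\beta$-commutative if $[a,b]_\beta=0$ for all $a,b$. $C$ generates the variety of all $H$-graded $\beta$-commutative algebras if its $H$-graded identities are exactly the $T_H$-ideal generated by $[x_{h,1},x_{k,2}]_\beta$, $h,k\in H$. $R\otimes C$ is $G\times H$-graded by $(R\otimes C)_{(g,h)}=R_g\otimes C_h$. $F\langle X|K\rangle$ denotes the free algebra on variables $x_{k,i}$ of degree $k\in K$, $i\ge1$; $T_K(\cdot)$ is the ideal of $K$-graded identities. For $\mathbf g\in G^n$, $P_{\mathbf g}$ is the span of $x_{g_{\sigma(1)},\sigma(1)}\cdots x_{g_{\sigma(n)},\sigma(n)}$, $\sigma\in S_n$;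 $P_{\mathbf g\times\mathbf h}$ is defined likewise with degrees $(g_i,h_i)$. Map $\zeta$: if $m=x_{(a_{\tau(1)},b_{\tau(1)}),\tau(1)}\cdots x_{(a_{\tau(k)},b_{\tau(k)}),\tau(k)}$ is a multilinear monomial in $F\langle X|G\times H\rangle$ in variables with indices $i_1<\dots<i_k$ ($\tau$ an ordering of these indices), let $\lambda\in F^*$ be such that $x_{b_{i_1},i_1}\cdots x_{b_{i_k},i_k}=\lambda\, x_{b_{\tau(1)},\tau(1)}\cdots x_{b_{\tau(k)},\tau(k)}$ in the free $H$-graded $\beta$-commutative algebra; set $\zeta(m)=\lambda m$. The linear map $\phi_{\mathbf h}$ on multilinear polynomials in $x_{a_1,1},\dots,x_{a_n,n}$ sends a monomial $x_{a_{\sigma(1)},\sigma(1)}\cdots x_{a_{\sigma(n)},\sigma(n)}$ to $\zeta(x_{(a_{\sigma(1)},h_{\sigma(1)}),\sigma(1)}\cdots x_{(a_{\sigma(n)},h_{\sigma(n)}),\sigma(n)})$. *)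

(* Defs.v *)
From HB Require Import structures.
From mathcomp Require Import all_boot all_order all_algebra all_fingroup.
From mathcomp Require Import finmap.
From mathcomp Require Import monalg.
From Stdlib Require Import ClassicalEpsilon.

Set Implicit Arguments.
Unset Strict Implicit.
Unset Printing Implicit Defensive.

Import GRing.Theory.
Local Open Scope ring_scope.

Section Defs.
Variable F : fieldType.

Definition is_group (G : Type) (gop : G -> G -> G) (gone : G) (ginv : G -> G) :=
  [/\ forall a b c, gop a (gop b c) = gop (gop a b) c,
      forall a, gop gone a = a, forall a, gop a gone = a,
      forall a, gop (ginv a) a = gone & forall a, gop a (ginv a) = gone].

Definition skew_bicharacter (H : zmodType) (beta : H -> H -> F) :=
  [/\ forall g h, beta g h != 0,
      forall g h k, beta (g + h) k = beta g k * beta h k,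
      forall g h k, beta g (h + k) = beta g h * beta g k &
      forall g h, beta g h = (beta h g)^-1].

Definition is_algebra (A : lmodType F) (mul : A -> A -> A) :=
  [/\ forall a x y, mul a (x + y) = mul a x + mul a y,
      forall a x y, mul (x + y) a = mul x a + mul y a,
      forall c x y, mul (c *: x) y = c *: mul x y,
      forall c x y, mul x (c *: y) = c *: mul x y &
      forall x y z, mul x (mul y z) = mul (mul x y) z].

Definition is_grading (K : eqType) (op : K -> K -> K)
    (A : lmodType F) (mul : A -> A -> A) (Ak : K -> A -> Prop) :=
  [/\ (forall k, Ak k 0) /\
        (forall k x y, Ak k x -> Ak k y -> Ak k (x + y)) /\
        (forall k c x, Ak k x -> Ak k (c *: x)),
      forall x, exists s : seq K, exists xs : K -> A,
          [/\ uniq s, forall k, Ak k (xs k) & x = \sum_(k <- s) xs k],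
      forall (s : seq K) (xs : K -> A), uniq s -> (forall k, Ak k (xs k)) ->
          \sum_(k <- s) xs k = 0 -> forall k, k \in s -> xs k = 0 &
      forall k l x y, Ak k x -> Ak l y -> Ak (op k l) (mul x y)].

Definition beta_commutative (H : zmodType) (beta : H -> H -> F)
    (A : lmodType F) (mul : A -> A -> A) (Ah : H -> A -> Prop) :=
  forall h k a b, Ah h a -> Ah k b -> mul a b - beta h k *: mul b a = 0.

(* The free K-graded algebra F<X|K>: F-linear combinations of words in *)
(* the variables x_{k,i} = (k, i) : K * nat.  (It contains the empty   *)
(* word; the free non-unital algebra is the part with zero constant    *)
(* term, see [no_const].)                                              *)
Definition FA (K : choiceType) := {malg F[{fmonom (K * nat)%type}]}.

Definition word (K : choiceType) (s : seq (K * nat)) : {fmonom (K * nat)%type} :=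
  FMonom s.

Definition no_const (K : choiceType) (p : FA K) := p@_(word [::]) = 0.

Definition evalw (K : choiceType) (A : lmodType F) (mul : A -> A -> A)
    (phi : K * nat -> A) (w : seq (K * nat)) : A :=
  match w with
  | [::] => 0
  | x :: s => foldl (fun a y => mul a (phi y)) (phi x) s
  end.

Definition evalp (K : choiceType) (A : lmodType F) (mul : A -> A -> A)
    (phi : K * nat -> A) (p : FA K) : A :=
  \sum_(w <- msupp p) p@_w *: evalw mul phi w.

Definition graded_identity (K : choiceType) (A : lmodType F) (mul : A -> A -> A)
    (Ak : K -> A -> Prop) (p : FA K) :=
  no_const p /\
  forall phi : K * nat -> A, (forall k i, Ak k (phi (k, i))) -> evalp mul phi p = 0.

Definition wdeg (H : zmodType) (w : seq (H * nat)) : H := \sum_(x <- w) x.1.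

Definition homogeneous (H : zmodType) (h : H) (p : FA H) :=
  forall w, w \in msupp p -> wdeg (w : seq (H * nat)) = h.

Definition subst (H : zmodType) (psi : H * nat -> FA H) (p : FA H) : FA H :=
  \sum_(w <- msupp p) p@_w *: \prod_(x <- (w : seq (H * nat))) psi x.

Definition graded_endo (H : zmodType) (psi : H * nat -> FA H) :=
  forall h i, homogeneous h (psi (h, i)) /\ no_const (psi (h, i)).

Definition T_ideal_closed (H : zmodType) (I : FA H -> Prop) :=
  [/\ I 0, forall p q, I p -> I q -> I (p + q),
      forall c p, I p -> I (c *: p),
      forall a p, I p -> I (a * p) /\ I (p * a) &
      forall psi, graded_endo psi -> forall p, I p -> I (subst psi p)].

Definition in_T_ideal (H : zmodType) (S : FA H -> Prop) (p : FA H) :=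
  forall I, T_ideal_closed I -> (forall s, S s -> I s) -> I p.

Definition beta_comm (H : zmodType) (beta : H -> H -> F) (h k : H) : FA H :=
  << word [:: (h, 1%N); (k, 2%N)] >> - beta h k *: << word [:: (k, 2%N); (h, 1%N)] >>.

Definition beta_comms (H : zmodType) (beta : H -> H -> F) (p : FA H) :=
  exists h k, p = beta_comm beta h k.

Definition generates_beta_variety (H : zmodType) (beta : H -> H -> F)
    (C : lmodType F) (mulC : C -> C -> C) (Ch : H -> C -> Prop) :=
  forall p : FA H, graded_identity mulC Ch p <-> in_T_ideal (beta_comms beta) p.

(* Tensor product R (x) C, built as the free vector space on R * C     *)
(* modulo the bilinearity relations.                                   *)
Section Tensor.
Variables (R C : lmodType F) (mulR : R -> R -> R) (mulC : C -> C -> C).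

Definition TRep := {malg F[(R * C)%type]}.

Definition bilin_rel (t : TRep) :=
  (exists a a' b, t = << (a + a', b) >> - << (a, b) >> - << (a', b) >>) \/
  (exists a b b', t = << (a, b + b') >> - << (a, b) >> - << (a, b') >>) \/
  (exists c a b, t = << (c *: a, b) >> - c *: << (a, b) >>) \/
  (exists c a b, t = << (a, c *: b) >> - c *: << (a, b) >>).

Definition tensor_zero (t : TRep) :=
  forall S : TRep -> Prop,
    [/\ S 0, forall x y, S x -> S y -> S (x + y) & forall c x, S x -> S (c *: x)] ->
    (forall x, bilin_rel x -> S x) -> S t.

Definition tmul (t t' : TRep) : TRep :=
  \sum_(u <- msupp t) \sum_(v <- msupp t')
     << (t@_u * t'@_v) *g (mulR u.1 v.1, mulC u.2 v.2) >>.

(* representatives of elements of (R (x) C)_(g,h) = R_g (x) C_h *)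
Definition tensor_hom (G H : Type) (Rg : G -> R -> Prop) (Ch : H -> C -> Prop)
    (gh : G * H) (t : TRep) :=
  forall u, u \in msupp t -> Rg gh.1 u.1 /\ Ch gh.2 u.2.

Definition tensor_graded_identity (G H : choiceType)
    (Rg : G -> R -> Prop) (Ch : H -> C -> Prop) (f : FA (G * H)%type) :=
  no_const f /\
  forall phi : (G * H) * nat -> TRep,
    (forall gh i, tensor_hom Rg Ch gh (phi (gh, i))) ->
    tensor_zero (evalp tmul phi f).
End Tensor.

(* Multilinear monomials and P_g.  Variables are x_{g_i, i}, i = 1..n  *)
(* (index i : 'I_n stands for variable number i.+1).                   *)
Definition mlword (K : choiceType) (n : nat) (g : 'I_n -> K) (s : 'S_n) :=
  word [seq (g (s k), (s k).+1) | k <- enum 'I_n].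

Definition in_P (K : choiceType) (n : nat) (g : 'I_n -> K) (f : FA K) :=
  forall w, w \in msupp f -> exists s : 'S_n, w = mlword g s.

(* lambda of the map zeta: for the monomial with ordering s, the       *)
(* lambda in F^* with x_{h_1,1}...x_{h_n,n} = lambda x_{h_s(1),s(1)}...  *)
(* x_{h_s(n),s(n)} in the free H-graded beta-commutative algebra       *)
(* F<X|H> / <[x_{h,1},x_{k,2}]_beta>^{T_H}.                             *)
Definition zeta_rel (H : zmodType) (beta : H -> H -> F) (n : nat) (h : 'I_n -> H)
    (s : 'S_n) (l : F) :=
  l != 0 /\
  in_T_ideal (beta_comms beta)
    (<< mlword h 1%g >> - l *: << mlword h s >>).

Definition zeta_lambda (H : zmodType) (beta : H -> H -> F) (n : nat) (h : 'I_n -> H)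
    (s : 'S_n) : F :=
  epsilon (inhabits 1) (zeta_rel beta h s).

Definition phi_h (G H : choiceType) (n : nat) (g : 'I_n -> G) (h : 'I_n -> H)
    (lam : 'S_n -> F) (f0 : FA G) : FA (G * H)%type :=
  \sum_(s : 'S_n) << (lam s * f0@_(mlword g s)) *g mlword (fun i => (g i, h i)) s >>.

End Defs.

(* Main.v *)
Require Import Defs.
From HB Require Import structures.
From mathcomp Require Import all_boot all_order all_algebra all_fingroup.
From mathcomp Require Import finmap monalg.
From Stdlib Require Import ClassicalEpsilon.
Set Implicit Arguments.
Unset Strict Implicit.
Unset Printing Implicit Defensive.
Import GRing.Theory.
Local Open Scope fset_scope.
Local Open Scope ring_scope.
Section LE.
Variables (F : fieldType) (K : choiceType) (V : lmodType F) (B : K -> V).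

Definition LE (p : {malg F[K]}) := \sum_(k <- msupp p) p@_k *: B k.

Lemma LEw (d : {fset K}) p : msupp p `<=` d -> LE p = \sum_(k <- d) p@_k *: B k.
Proof.
move=> le; rewrite /LE [LHS](big_fset_incl _ le) => //= x xd /mcoeff_outdom ->.
by rewrite scale0r.
Qed.

Lemma LEU c k : LE << c *g k >> = c *: B k.
Proof. by rewrite (LEw msuppU_le) big_seq_fset1 mcoeffUU. Qed.

Lemma LED p q : LE (p + q) = LE p + LE q.
Proof.
pose d := msupp p `|` msupp q.
have hp : msupp p `<=` d by apply: fsubsetUl.
have hq : msupp q `<=` d by apply: fsubsetUr.
have hpq : msupp (p + q) `<=` d by apply: msuppD_le.
rewrite (LEw hp) (LEw hq) (LEw hpq) -big_split /=.
by apply: eq_bigr => k _; rewrite mcoeffD scalerDl.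
Qed.

Lemma LEZ c p : LE (c *: p) = c *: LE p.
Proof.
rewrite (LEw (msuppZ_le c p)) /LE scaler_sumr; apply: eq_bigr => k _.
by rewrite mcoeffZ scalerA.
Qed.

Lemma LE0 : LE 0 = 0.
Proof. by rewrite /LE msupp0 big_seq_fset0. Qed.

Lemma LEN p : LE (- p) = - LE p.
Proof. by apply/eqP; rewrite -addr_eq0 -LED addNr LE0. Qed.

Lemma LEB p q : LE (p - q) = LE p - LE q.
Proof. by rewrite LED LEN. Qed.

Lemma LE_UB (k1 k2 : K) c : LE (<< k1 >> - c *: << k2 >>) = B k1 - c *: B k2.
Proof. by rewrite LEB LEZ !LEU !scale1r. Qed.

Lemma LE_sum (I : Type) (r : seq I) (P : pred I) (f : I -> {malg F[K]}) :
  LE (\sum_(i <- r | P i) f i) = \sum_(i <- r | P i) LE (f i).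
Proof. by apply: (big_morph _ LED LE0). Qed.

Lemma LE_ext (B' : K -> V) p : {in msupp p, B =1 B'} ->
  LE p = \sum_(k <- msupp p) p@_k *: B' k.
Proof. by move=> e; apply: eq_big_seq => k /e ->. Qed.
End LE.

Lemma mcoeff_sum (F : fieldType) (K : choiceType) (I : Type) (r : seq I) (P : pred I)
  (G : I -> {malg F[K]}) k :
  (\sum_(i <- r | P i) G i)@_k = \sum_(i <- r | P i) (G i)@_k.
Proof. exact: raddf_sum. Qed.

Lemma word_nil (K : choiceType) : word [::] = mone :> {fmonom (K * nat)%type}.
Proof. by apply: val_inj; rewrite /= fm1. Qed.

Lemma word_cat (K : choiceType) (a b : seq (K * nat)) :
  mmul (word a) (word b) = word (a ++ b).
Proof. by apply: val_inj; rewrite /= fmM. Qed.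

Lemma word_inj (K : choiceType) (a b : seq (K * nat)) : word a = word b -> a = b.
Proof. by move=> e; have := congr1 (@fmonom_val _) e. Qed.

Lemma word_eq (K : choiceType) (a b : seq (K * nat)) : (word a == word b) = (a == b).
Proof. by apply/eqP/eqP => [/word_inj|->]. Qed.

Lemma coefUB (F : fieldType) (K : choiceType) (w1 w2 w : {fmonom (K * nat)%type}) (c : F) :
  (<< w1 >> - c *: << w2 >> : FA F K)@_w = (w1 == w)%:R - c * (w2 == w)%:R.
Proof. by rewrite mcoeffB mcoeffZ !mcoeffU1. Qed.

Lemma eval_fm (K : choiceType) (w : {fmonom (K * nat)%type}) : word w = w.
Proof. by apply: val_inj. Qed.

Section EvalGen.
Variables (F : fieldType) (K : choiceType) (A : lmodType F) (mul : A -> A -> A).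
Hypothesis Aalg : is_algebra mul.
Variable phi : K * nat -> A.

Local Notation ev := (evalw mul phi).
Local Notation fstep := (fun a y => mul a (phi y)).

Lemma mulr0A a : mul a 0 = 0.
Proof.
case: Aalg => hD _ _ _ _; have h := hD a 0 0; rewrite addr0 in h.
by apply: (addrI (mul a 0)); rewrite addr0 -h.
Qed.

Lemma mul0rA a : mul 0 a = 0.
Proof.
case: Aalg => _ hD _ _ _; have h := hD a 0 0; rewrite addr0 in h.
by apply: (addrI (mul 0 a)); rewrite addr0 -h.
Qed.

Lemma mul_sumr a (I : Type) (r : seq I) (P : pred I) (G : I -> A) :
  mul a (\sum_(i <- r | P i) G i) = \sum_(i <- r | P i) mul a (G i).
Proof. case: Aalg => hD _ _ _ _; apply: (big_morph _ (hD a) (mulr0A a)). Qed.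

Lemma mul_suml a (I : Type) (r : seq I) (P : pred I) (G : I -> A) :
  mul (\sum_(i <- r | P i) G i) a = \sum_(i <- r | P i) mul (G i) a.
Proof.
case: Aalg => _ hD _ _ _.
by apply: (big_morph (fun x => mul x a) (fun x y => hD a x y) (mul0rA a)).
Qed.

Lemma foldl_mulA a b w : foldl fstep (mul a b) w = mul a (foldl fstep b w).
Proof.
case: Aalg => _ _ _ _ hA.
by elim: w a b => [|x w IH] a b //=; rewrite -hA IH.
Qed.

Lemma evalw_cat u w : u != [::] -> w != [::] -> ev (u ++ w) = mul (ev u) (ev w).
Proof.
case: u => [|x u] // _; case: w => [|y w] // _.
by rewrite /= foldl_cat /= foldl_mulA.
Qed.

Lemma evalw_cons x w : w != [::] -> ev (x :: w) = mul (phi x) (ev w).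
Proof. by move=> wn; rewrite -cat1s evalw_cat. Qed.

Lemma evalpE (p : FA F K) : evalp mul phi p = LE (fun w : {fmonom (K * nat)%type} => ev w) p.
Proof. by []. Qed.

Lemma no_const_msupp (p : FA F K) w : no_const p -> w \in msupp p -> w != mone.
Proof.
rewrite /no_const word_nil => h; apply: contraL => /eqP ->.
by rewrite -mcoeff_eq0 h.
Qed.

Lemma fm_nil (w : {fmonom (K * nat)%type}) : (w != mone) = ((w : seq _) != [::]).
Proof. by rewrite fmP fm1. Qed.

Lemma evalp_mul (a b : FA F K) : no_const a -> no_const b ->
  evalp mul phi (a * b) = mul (evalp mul phi a) (evalp mul phi b).
Proof.
move=> na nb; case: Aalg => _ _ hZl hZr _.
rewrite !evalpE malgME LE_sum [X in _ = mul X _]/LE mul_suml.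
apply: eq_big_seq => u uin.
rewrite LE_sum hZl [X in _ = _ *: mul _ X]/LE mul_sumr scaler_sumr.
apply: eq_big_seq => v vin.
rewrite LEU fmM hZr evalw_cat ?scalerA // -fm_nil.
  exact: (no_const_msupp na).
exact: (no_const_msupp nb).
Qed.

Lemma no_const_mulr (a b : FA F K) : no_const b -> no_const (a * b).
Proof.
move=> nb; rewrite /no_const word_nil mcoeffMl big1 // => u _.
rewrite big1_seq // => v /andP[_ vin]; rewrite fmM_eq1.
have /negbTE -> : v != mone by apply: (no_const_msupp nb vin).
by rewrite andbF.
Qed.

Lemma no_const_mull (a b : FA F K) : no_const a -> no_const (a * b).
Proof.
move=> na; rewrite /no_const word_nil mcoeffMl big1_seq // => u /andP[_ uin].
have /negbTE un : u != mone by apply: (no_const_msupp na uin).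
by rewrite big1 // => v _; rewrite fmM_eq1 un.
Qed.

Lemma evalp_mul_l (a p : FA F K) : no_const p -> evalp mul phi p = 0 ->
  evalp mul phi (a * p) = 0.
Proof.
move=> np ep; case: Aalg => _ _ hZl hZr _.
rewrite evalpE /LE in ep.
rewrite evalpE malgME LE_sum big1_seq // => u uin.
rewrite LE_sum.
have -> : \sum_(v <- msupp p) LE (fun w : {fmonom (K * nat)%type} => ev w)
             << a@_u * p@_v *g (mmul u v) >> =
          a@_u *: \sum_(v <- msupp p) p@_v *: ev (mmul u v).
  by rewrite scaler_sumr; apply: eq_bigr => v _; rewrite LEU scalerA.
case: (eqVneq u mone) => [->|un].
  by under eq_bigr => v _ do rewrite mul1m; rewrite ep scaler0.
rewrite big_seq (eq_bigr (fun v => p@_v *: mul (ev u) (ev v))).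
  rewrite -big_seq; under eq_bigr => i _ do rewrite -hZr.
  by rewrite -mul_sumr ep mulr0A scaler0.
move=> v vin; rewrite fmM evalw_cat // -fm_nil //.
exact: (no_const_msupp np).
Qed.

Lemma evalp_mul_r (a p : FA F K) : no_const p -> evalp mul phi p = 0 ->
  evalp mul phi (p * a) = 0.
Proof.
move=> np ep; case: Aalg => _ _ hZl hZr _.
rewrite evalpE /LE in ep.
rewrite evalpE malgME LE_sum; under eq_bigr => w _ do rewrite LE_sum.
rewrite exchange_big /= big1_seq // => u uin.
have -> : \sum_(v <- msupp p) LE (fun w : {fmonom (K * nat)%type} => ev w)
             << p@_v * a@_u *g (mmul v u) >> =
          a@_u *: \sum_(v <- msupp p) p@_v *: ev (mmul v u).
  by rewrite scaler_sumr; apply: eq_bigr => v _; rewrite LEU scalerA mulrC.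
case: (eqVneq u mone) => [->|un].
  by under eq_bigr => v _ do rewrite mulm1; rewrite ep scaler0.
rewrite big_seq (eq_bigr (fun v => p@_v *: mul (ev v) (ev u))).
  rewrite -big_seq; under eq_bigr => i _ do rewrite -hZl.
  by rewrite -mul_suml ep mul0rA scaler0.
move=> v vin; rewrite fmM evalw_cat // -fm_nil //.
exact: (no_const_msupp np).
Qed.
End EvalGen.

Section TClosed.
Variables (F : fieldType) (H : zmodType) (beta : H -> H -> F) (A : lmodType F)
  (mul : A -> A -> A) (Ah : H -> A -> Prop).
Hypotheses (Aalg : is_algebra mul) (A0 : forall h, Ah h 0)
  (AD : forall h x y, Ah h x -> Ah h y -> Ah h (x + y))
  (AZ : forall h c x, Ah h x -> Ah h (c *: x))
  (AM : forall a b x y, Ah a x -> Ah b y -> Ah (a + b) (mul x y))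
  (Acomm : beta_commutative beta mul Ah).

Lemma evalw_graded phi (gphi : forall k i, Ah k (phi (k, i))) (w : seq (H * nat)) :
  Ah (wdeg w) (evalw mul phi w).
Proof.
case: w => [|x w] /=; first exact: A0.
rewrite /wdeg big_cons.
have : Ah x.1 (phi x) by case: x => k i; apply: gphi.
elim: w (phi x) x.1 => [|y w IH] a b ha /=; first by rewrite big_nil addr0.
rewrite big_cons addrA; apply: IH; apply: AM => //.
by case: y => k i; apply: gphi.
Qed.

Lemma evalp_graded phi (gphi : forall k i, Ah k (phi (k, i))) h (q : FA F H) :
  homogeneous h q -> Ah h (evalp mul phi q).
Proof.
move=> hq; rewrite evalpE /LE big_seq.
elim/big_rec: _ => [|w acc /hq wd IH]; first exact: A0.
apply: AD => //; apply: AZ; rewrite -wd; exact: evalw_graded.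
Qed.

Lemma prod_no_const (psi : H * nat -> FA F H) (w : seq (H * nat)) :
  w != [::] -> (forall x, no_const (psi x)) -> no_const (\prod_(x <- w) psi x).
Proof.
case: w => [|x w] // _ hn; rewrite big_cons; exact: no_const_mull.
Qed.

Lemma eval_prod (psi : H * nat -> FA F H) phi (w : seq (H * nat)) :
  w != [::] -> (forall x, no_const (psi x)) ->
  evalp mul phi (\prod_(x <- w) psi x) =
  evalw mul (fun x => evalp mul phi (psi x)) w.
Proof.
case: w => [|x w] // _ hn.
elim: w x => [|y w IH] x; first by rewrite big_cons big_nil mulr1.
rewrite big_cons (evalp_mul Aalg) //; last by apply: prod_no_const.
by rewrite IH [RHS](evalw_cons Aalg).
Qed.

Theorem graded_identity_T : T_ideal_closed (graded_identity mul Ah).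
Proof.
split.
- split; first by rewrite /no_const mcoeff0.
  by move=> phi _; rewrite evalpE LE0.
- move=> p q [np ep] [nq eq]; split; first by rewrite /no_const mcoeffD np nq addr0.
  by move=> phi gphi; rewrite evalpE LED -!evalpE ep // eq // addr0.
- move=> c p [np ep]; split; first by rewrite /no_const mcoeffZ np mulr0.
  by move=> phi gphi; rewrite evalpE LEZ -!evalpE ep // scaler0.
- move=> a p [np ep]; split; split.
  + exact: no_const_mulr.
  + by move=> phi gphi; apply: (evalp_mul_l Aalg) => //; apply: ep.
  + exact: no_const_mull.
  + by move=> phi gphi; apply: (evalp_mul_r Aalg) => //; apply: ep.
- move=> psi gpsi p [np ep].
  have hn : forall x, no_const (psi x) by case=> k i; case: (gpsi k i).
  split.
    rewrite /subst /no_const mcoeff_sum big1_seq // => w /andP[_ win].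
    rewrite mcoeffZ; have := prod_no_const (w := w) _ hn; rewrite /no_const => ->.
      by rewrite mulr0.
    by rewrite -fm_nil; apply: (no_const_msupp np).
  move=> phi gphi.
  pose phi' := fun x => evalp mul phi (psi x).
  have gphi' : forall k i, Ah k (phi' (k, i)).
    by move=> k i; apply: evalp_graded => //; case: (gpsi k i).
  transitivity (evalp mul phi' p); last exact: ep.
  rewrite evalpE /subst LE_sum [RHS]evalpE [RHS]/LE big_seq [RHS]big_seq.
  apply: eq_bigr => w win; rewrite LEZ -evalpE eval_prod //.
  by rewrite -fm_nil; apply: (no_const_msupp np).
Qed.

Lemma comm_identity s : beta_comms beta s -> graded_identity mul Ah s.
Proof.
case=> h [k ->]; split.
  by rewrite /no_const /beta_comm coefUB !word_eq /= mulr0 subrr.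
move=> phi gphi; rewrite evalpE /beta_comm LE_UB /=.
by apply: Acomm; apply: gphi.
Qed.
End TClosed.

Section DAlg.
Variables (F : fieldType) (H : zmodType) (beta : H -> H -> F).
Hypothesis bb : skew_bicharacter beta.
Variables (n : nat) (h : 'I_n -> H).

Local Notation T := {set 'I_n}.
Local Notation N := #|{: T}|.

Definition ev (a : 'I_N) : T := enum_val a.
Definition er (S : T) : 'I_N := enum_rank S.
Lemma erK : cancel er ev. Proof. exact: enum_rankK. Qed.
Lemma evK : cancel ev er. Proof. exact: enum_valK. Qed.
Lemma ev_inj : injective ev. Proof. exact: enum_val_inj. Qed.

Definition eps (j : 'I_n) (S : T) : F :=
  \prod_(t in S) (if (t < j)%N then beta (h j) (h t) else 1).

Definition Emx (j : 'I_n) : 'M[F]_N :=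
  \matrix_(a < N, b < N) (if (j \notin ev b) && (ev a == j |: ev b)
                   then eps j (ev b) else 0).

Lemma EE_entry j k a b : (Emx j *m Emx k) a b =
  if [&& k \notin ev b, j \notin k |: ev b &
         ev a == j |: (k |: ev b)]
  then eps j (k |: ev b) * eps k (ev b) else 0.
Proof.
set S := ev b.
rewrite !mxE (bigD1 (er (k |: S))) //= big1 ?addr0.
  rewrite !mxE !erK -/S eqxx andbT.
  by case: (k \notin S); case: ifP => _ /=; rewrite ?mulr0 ?mul0r.
move=> c /negbTE cn; rewrite [X in _ * X]mxE -/S.
case: ifP => [/andP[_ /eqP ec]|_]; last by rewrite mulr0.
by exfalso; move: cn; rewrite -ec evK eqxx.
Qed.

Lemma eps_U1 j (k : 'I_n) (S : T) : k \notin S ->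
  eps j (k |: S) = (if (k < j)%N then beta (h j) (h k) else 1) * eps j S.
Proof. by move=> kS; rewrite /eps big_setU1. Qed.

Lemma beta_inv a b : beta a b * beta b a = 1.
Proof. case: bb => nz _ _ sk; by rewrite sk mulVf. Qed.

Lemma E_comm j k : Emx j *m Emx k = beta (h j) (h k) *: (Emx k *m Emx j).
Proof.
apply/matrixP => a b; rewrite [RHS]mxE !EE_entry.
set S := ev b.
case: (eqVneq j k) => [<-|jk]; first by rewrite !setU11 /= !andbF /= mulr0.
have -> : (j \notin k |: S) = (j \notin S) by rewrite in_setU1 (negbTE jk).
have -> : (k \notin j |: S) = (k \notin S) by rewrite in_setU1 eq_sym (negbTE jk).
rewrite setUCA.
case: (boolP (k \in S)) => kS /=; first by rewrite ?andbF /= ?mulr0.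
case: (boolP (j \in S)) => jS /=; first by rewrite ?andbF /= ?mulr0.
case: ifP => _; last by rewrite mulr0.
rewrite !eps_U1 //.
case: (ltngtP j k) => [jlk|klj|e].
- by rewrite mul1r !mulrA beta_inv mul1r mulrC.
- by rewrite mul1r -mulrA; congr (_ * _); exact: mulrC.
- by exfalso; move/eqP: jk; apply; apply: val_inj.
Qed.

Inductive Dg : H -> 'M[F]_N -> Prop :=
| Dg0 a : Dg a 0
| DgD a x y : Dg a x -> Dg a y -> Dg a (x + y)
| DgZ a c x : Dg a x -> Dg a (c *: x)
| DgE j : Dg (h j) (Emx j)
| DgM a b x y : Dg a x -> Dg b y -> Dg (a + b) (x *m y).

Lemma E_comm_gen j b y : Dg b y -> Emx j *m y = beta (h j) b *: (y *m Emx j).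
Proof.
case: bb => _ bl br _.
elim=> {b y} [a|a x y _ IHx _ IHy|a c x _ IHx|k|a b x y _ IHx _ IHy].
- by rewrite mulmx0 mul0mx scaler0.
- by rewrite mulmxDr mulmxDl IHx IHy scalerDr.
- by rewrite -scalemxAr -scalemxAl IHx !scalerA mulrC.
- exact: E_comm.
- rewrite mulmxA IHx -scalemxAl -mulmxA IHy -scalemxAr scalerA br.
  by rewrite mulmxA.
Qed.

Lemma Dg_comm a x b y : Dg a x -> Dg b y -> x *m y = beta a b *: (y *m x).
Proof.
case: bb => _ bl br _ hx hy.
elim: hx => {a x} [a|a x1 x2 _ IH1 _ IH2|a c x _ IH|j|a1 a2 x1 x2 _ IH1 _ IH2].
- by rewrite mul0mx mulmx0 scaler0.
- by rewrite mulmxDl mulmxDr IH1 IH2 scalerDr.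
- by rewrite -scalemxAl -scalemxAr IH !scalerA mulrC.
- exact: E_comm_gen.
- rewrite -mulmxA IH2 -scalemxAr mulmxA [in LHS]mulmxA IH1 -scalemxAl.
  by rewrite scalerA bl mulrC.
Qed.

Lemma mx_alg : is_algebra (@mulmx F N N N).
Proof.
split.
- by move=> ???; rewrite mulmxDr.
- by move=> ???; rewrite mulmxDl.
- by move=> ???; rewrite scalemxAl.
- by move=> ???; rewrite scalemxAr.
- by move=> ???; rewrite mulmxA.
Qed.

Definition Qmx (l : seq 'I_n) : 'M[F]_N := foldr (fun j M => Emx j *m M) 1%:M l.

Lemma Qmx_entry (l : seq 'I_n) c : sorted (fun i j : 'I_n => (i < j)%N) l ->
  Qmx l c (er (set0 : T)) = (ev c == [set x in l])%:R.
Proof.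
elim: l c => [|j l IH] c /=.
  move=> _; rewrite mxE; congr (_%:R).
  have -> : [set x in [::]] = set0 :> T by apply/setP => x; rewrite !inE.
  by rewrite -(inj_eq ev_inj) erK.
move=> srt.
have srtl : sorted (fun i j : 'I_n => (i < j)%N) l by apply: path_sorted srt.
have allj : all (fun x : 'I_n => (j < x)%N) l.
  apply: (order_path_min _ srt) => x y z; exact: ltn_trans.
rewrite mxE (bigD1 (er [set x in l])) //= big1 ?addr0.
  rewrite IH // erK eqxx mulr1 mxE erK.
  have jl : j \notin [set x in l].
    rewrite inE; apply/negP => /(allP allj); by rewrite ltnn.
  have e1 : eps j [set x in l] = 1.
    rewrite /eps big1 // => t; rewrite inE => /(allP allj) jt.
    by rewrite ltnNge (ltnW jt).
  have e2 : [set x in j :: l] = j |: [set x in l].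
    by apply/setP => x; rewrite !inE.
  by rewrite jl e1 e2 /=; case: (ev c == _).
move=> d dn; rewrite IH //; case: eqP => [ed|_]; last by rewrite mulr0.
by move: dn; rewrite -ed evK eqxx.
Qed.

Lemma Qmx_nz : Qmx (enum 'I_n) != 0.
Proof.
apply/negP => /eqP Q0.
have srt : sorted (fun i j : 'I_n => (i < j)%N) (enum 'I_n).
  have := iota_ltn_sorted 0 n; rewrite -val_enum_ord sorted_map; exact.
have := Qmx_entry (er [set x in enum 'I_n]) srt.
rewrite Q0 mxE erK eqxx /=; move/eqP; by rewrite eq_sym oner_eq0.
Qed.
End DAlg.

Section Proper.
Variables (F : fieldType) (H : zmodType) (beta : H -> H -> F).
Hypothesis bb : skew_bicharacter beta.
Variables (n : nat) (h : 'I_n -> H).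

Local Notation N := #|{: {set 'I_n}}|.
Local Notation Dgh := (Dg beta h).
Local Notation E := (Emx beta h).

Definition phiD (x : H * nat) : 'M[F]_N :=
  \sum_(j : 'I_n | (x.2 == j.+1) && (x.1 == h j)) E j.

Lemma phiD_graded k i : Dgh k (phiD (k, i)).
Proof.
rewrite /phiD; apply: big_ind => [|x y|j /andP[_ /eqP /= ->]];
  [exact: Dg0|exact: DgD|exact: DgE].
Qed.

Lemma phiD_val (k : 'I_n) : phiD (h k, k.+1) = E k.
Proof.
rewrite /phiD (big_pred1 k) // => j /=.
rewrite eqSS; case: (eqVneq j k) => [->|jk]; first by rewrite !eqxx.
have -> : (k == j :> nat) = false by apply/negbTE; rewrite eq_sym.
by rewrite andFb.
Qed.

Lemma evalw_mx (phi : H * nat -> 'M[F]_N) (w : seq (H * nat)) : w != [::] ->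
  evalw (@mulmx F N N N) phi w = foldr (fun y M => phi y *m M) 1%:M w.
Proof.
case: w => [|x w] // _; elim: w x => [|y w IH] x; first by rewrite /= mulmx1.
by rewrite (evalw_cons (mx_alg F n)) // IH.
Qed.

Lemma T_proper : (0 < n)%N -> ~ in_T_ideal (beta_comms beta) << mlword h 1%g >>.
Proof.
move=> n0 hin.
have Acomm : beta_commutative beta (@mulmx F N N N) Dgh.
  by move=> a b x y hx hy; rewrite (Dg_comm bb hx hy) subrr.
have TI : T_ideal_closed (graded_identity (@mulmx F N N N) Dgh).
  apply: (graded_identity_T (mx_alg F n)).
  - by move=> a; apply: Dg0.
  - by move=> a x y; apply: DgD.
  - by move=> a c x; apply: DgZ.
  - by move=> a b x y; apply: DgM.
have [_ /(_ phiD phiD_graded)] := hin _ TI (comm_identity Acomm).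
rewrite evalpE LEU scale1r /mlword /= evalw_mx; last first.
  by case: (enum 'I_n) (size_enum_ord n) => [|? ?] //= e; rewrite -e in n0.
rewrite foldr_map.
have -> : foldr (fun k M => phiD (h ((1%g : 'S_n) k), ((1%g : 'S_n) k).+1) *m M) 1%:M
   (enum 'I_n) = Qmx beta h (enum 'I_n).
  by rewrite /Qmx; elim: (enum 'I_n) => //= k l ->; rewrite perm1 phiD_val.
by move/eqP; apply/negP; apply: Qmx_nz.
Qed.
End Proper.

Lemma U_mul (F : fieldType) (K : choiceType) (a b : seq (K * nat)) :
  (<< word a >> * << word b >> : FA F K) = << word (a ++ b) >>.
Proof. by rewrite malgM_def fgmulUU mulr1 word_cat. Qed.

Lemma scaleU (F : fieldType) (K : choiceType) (k : K) (c : F) :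
  (c *: << k >> : {malg F[K]}) = << c *g k >>.
Proof. by apply/malgP => k'; rewrite mcoeffZ !mcoeffU mulr_natr. Qed.

Lemma U_mulZ (F : fieldType) (K : choiceType) (a b : seq (K * nat)) (c : F) :
  (<< word a >> * << c *g word b >> : FA F K) = << c *g word (a ++ b) >>.
Proof. by rewrite malgM_def fgmulUU mul1r word_cat. Qed.

Lemma U_comm2 (F : fieldType) (K : choiceType) (a b : seq (K * nat)) (c : F) :
  (<< word a >> * << word b >> - c *: (<< word b >> * << word a >>) : FA F K) =
  << word (a ++ b) >> - c *: << word (b ++ a) >>.
Proof. by rewrite !U_mul. Qed.

Lemma U_mulB (F : fieldType) (K : choiceType) (a a' b : seq (K * nat)) (c : F) :
  ((<< word a >> - c *: << word a' >>) * << word b >> : FA F K) =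
  << word (a ++ b) >> - c *: << word (a' ++ b) >>.
Proof. by rewrite mulrBl -scalerAl !U_mul. Qed.

Section Lambda.
Variables (F : fieldType) (H : zmodType) (beta : H -> H -> F).
Hypothesis bb : skew_bicharacter beta.

Local Notation J := (in_T_ideal (beta_comms beta)).

Lemma J_closed : T_ideal_closed J.
Proof.
split.
- by move=> I [] //.
- by move=> p q hp hq I hI hS; case: (hI) => _ hD _ _ _; apply: hD; [apply: hp|apply: hq].
- by move=> c p hp I hI hS; case: (hI) => _ _ hZ _ _; apply: hZ; apply: hp.
- move=> a p hp; split=> I hI hS; case: (hI) => _ _ _ hM _; have [h1 h2] := hM a p (hp I hI hS); [exact: h1|exact: h2].
- by move=> psi gp p hp I hI hS; case: (hI) => _ _ _ _ hs; apply: hs => //; apply: hp.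
Qed.

Definition Rel (u v : seq (H * nat)) :=
  exists l : F, l != 0 /\ J (<< word u >> - l *: << word v >>).

Lemma Rel_refl u : Rel u u.
Proof.
exists 1; split; first exact: oner_neq0.
by rewrite scale1r subrr; case: J_closed.
Qed.

Lemma Rel_trans u v w : Rel u v -> Rel v w -> Rel u w.
Proof.
move=> [l [l0 hl]] [l' [l0' hl']]; exists (l * l'); split; first by rewrite mulf_neq0.
have -> : << word u >> - (l * l') *: << word w >> =
   (<< word u >> - l *: << word v >>) + l *: (<< word v >> - l' *: << word w >>).
  by rewrite scalerBr scalerA addrA subrK.
case: J_closed => _ hD hZ _ _; apply: hD; [exact: hl | exact: hZ].
Qed.

Lemma Rel_pre x u v : Rel u v -> Rel (x :: u) (x :: v).
Proof.
move=> [l [l0 hl]]; exists l; split; first exact: l0.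
have -> : << word (x :: u) >> - l *: << word (x :: v) >> =
    << word [:: x] >> * (<< word u >> - l *: << word v >>) :> FA F H.
  by rewrite mulrBr !scaleU U_mul U_mulZ.
case: J_closed => _ _ _ hM _; have [h1 _] := hM (<< word [:: x] >>) _ hl; exact: h1.
Qed.

Lemma single_endo (z : H * nat) : homogeneous z.1 (<< word [:: z] >> : FA F H) /\
  no_const (<< word [:: z] >> : FA F H).
Proof.
split.
  move=> w; rewrite msuppU1 inE => /eqP ->.
  by rewrite /wdeg big_cons big_nil addr0.
by rewrite /no_const mcoeffU1 word_eq.
Qed.

Definition swpsi (x y : H * nat) (z : H * nat) : FA F H :=
  if z == (x.1, 1%N) then << word [:: x] >>
  else if z == (y.1, 2%N) then << word [:: y] >> else << word [:: z] >>.

Lemma swpsi_endo x y : graded_endo (swpsi x y).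
Proof.
move=> k i; rewrite /swpsi.
case: eqP => [[-> _]|_]; first exact: single_endo.
case: eqP => [[-> _]|_]; first exact: single_endo.
exact: (single_endo (k, i)).
Qed.

Lemma subst_comm2 (psi : H * nat -> FA F H) (z1 z2 : H * nat) (c : F) :
  subst psi (<< word [:: z1; z2] >> - c *: << word [:: z2; z1] >>) =
  psi z1 * psi z2 - c *: (psi z2 * psi z1).
Proof.
have -> : subst psi = LE (fun w : {fmonom (H * nat)%type} => \prod_(x <- (w : seq _)) psi x) by [].
by rewrite LE_UB /= !big_cons !big_nil !mulr1.
Qed.

Lemma Rel_swap x y b : Rel (x :: y :: b) (y :: x :: b).
Proof.
exists (beta x.1 y.1); split; first by case: bb.
have hc : J (beta_comm beta x.1 y.1) by move=> I _ hS; apply: hS; exists x.1, y.1.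
case: J_closed => _ _ _ hM hs.
have := hs _ (swpsi_endo x y) _ hc.
rewrite /beta_comm subst_comm2.
have -> : swpsi x y (x.1, 1%N) = << word [:: x] >> by rewrite /swpsi eqxx.
have -> : swpsi x y (y.1, 2%N) = << word [:: y] >>.
  by rewrite /swpsi xpair_eqE andbF eqxx.
rewrite U_comm2 => hj.
have [_ h2] := hM (<< word b >>) _ hj.
by move: h2; rewrite U_mulB.
Qed.

Lemma Rel_front x v1 v2 : Rel (x :: v1 ++ v2) (v1 ++ x :: v2).
Proof.
elim: v1 => [|y v1 IH] /=; first exact: Rel_refl.
apply: Rel_trans (Rel_swap x y (v1 ++ v2)) _.
exact: Rel_pre.
Qed.

Lemma Rel_perm u v : perm_eq u v -> Rel u v.
Proof.
elim: u v => [|x u IH] v.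
  by move/perm_size; case: v => //= _; exact: Rel_refl.
move=> puv.
have xin : x \in v by rewrite -(perm_mem puv) mem_head.
case/splitPr: xin puv => v1 v2 puv.
have pe : perm_eq u (v1 ++ v2).
  rewrite -(perm_cons x); apply: perm_trans puv _.
  by rewrite -cat1s perm_catCA.
apply: Rel_trans (Rel_pre x (IH _ pe)) _.
exact: Rel_front.
Qed.

Variables (n : nat) (h : 'I_n -> H).

Lemma mlword_perm (s : 'S_n) :
  perm_eq [seq (h ((1%g : 'S_n) k), ((1%g : 'S_n) k).+1) | k <- enum 'I_n]
          [seq (h (s k), (s k).+1) | k <- enum 'I_n].
Proof.
have -> : [seq (h (s k), (s k).+1) | k <- enum 'I_n] =
   map (fun k => (h k, k.+1)) (map s (enum 'I_n)) by elim: (enum 'I_n) => //= k l ->.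
have -> : [seq (h ((1%g : 'S_n) k), ((1%g : 'S_n) k).+1) | k <- enum 'I_n] =
   map (fun k => (h k, k.+1)) (enum 'I_n).
  by apply: eq_map => k; rewrite perm1.
apply: perm_map; apply: uniq_perm.
- exact: enum_uniq.
- by rewrite map_inj_uniq ?enum_uniq //; apply: perm_inj.
move=> k; rewrite mem_enum; symmetry; apply/mapP; exists (s^-1 k)%g.
  by rewrite mem_enum.
by rewrite permKV.
Qed.

Lemma zeta_spec (s : 'S_n) : zeta_rel beta h s (zeta_lambda beta h s).
Proof.
rewrite /zeta_lambda; apply: epsilon_spec.
have [l [l0 hl]] := Rel_perm (mlword_perm s).
by exists l.
Qed.
End Lambda.

From mathcomp Require classical_sets.

Section Functional.
Variables (F : fieldType) (C : lmodType F) (m : C).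
Hypothesis m0 : m != 0.

Definition PZ (M : C -> Prop) :=
  [/\ forall x y, M x -> M y -> M (x + y), forall c x, M x -> M (c *: x) & ~ M m].

Lemma maximal_sub : exists A, PZ A /\
  forall B : C -> Prop, (forall t, A t -> B t) -> ~ (forall t, B t -> A t) -> ~ PZ B.
Proof.
have := @classical_sets.Zorn_bigcup C PZ.
case.
  move=> Fc FP tot; split.
  - move=> x y [X FX Xx] [Y FY Yy].
    case: (tot X Y FX FY) => [XY|YX].
      exists Y => //; case: (FP Y FY) => hD _ _; apply: hD => //; exact: XY.
    exists X => //; case: (FP X FX) => hD _ _; apply: hD => //; exact: YX.
  - move=> c x [X FX Xx]; exists X => //; case: (FP X FX) => _ hZ _; exact: hZ.
  - by move=> [X FX Xm]; case: (FP X FX) => _ _; apply.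
move=> A [PA hA]; exists A; split=> // B AB nBA; apply: hA; split=> //.
Qed.

Lemma functional_ex : exists l : C -> F,
  [/\ forall x y, l (x + y) = l x + l y, forall c x, l (c *: x) = c * l x & l m = 1].
Proof.
have [A [[AD AZ Am] Amax]] := maximal_sub.
pose A0 y := y = 0 \/ A y.
have A0D : forall x y, A0 x -> A0 y -> A0 (x + y).
  move=> x y [->|hx] [->|hy]; rewrite ?add0r ?addr0; [by left|by right|by right|].
  by right; apply: AD.
have A0Z : forall c x, A0 x -> A0 (c *: x).
  move=> c x [->|hx]; first by left; rewrite scaler0.
  by right; apply: AZ.
have A0m : ~ A0 m by case=> [/eqP|//]; rewrite (negbTE m0).
have A00 : A0 0 by left.
have ex : forall x, exists c, A0 (x - c *: m).
  move=> x; case: (classic (A0 x)) => [hx|nx].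
    by exists 0; rewrite scale0r subr0.
  pose B y := exists d, A0 (y - d *: x).
  have : ~ PZ B.
    apply: Amax.
      by move=> t At; exists 0; rewrite scale0r subr0; right.
    move=> BA; apply: nx; right; apply: BA; exists 1; rewrite scale1r subrr; exact: A00.
  have BD : forall y z, B y -> B z -> B (y + z).
    move=> y z [d hd] [e he]; exists (d + e).
    by rewrite scalerDl opprD addrACA; apply: A0D.
  have BZ : forall c y, B y -> B (c *: y).
    move=> c y [d hd]; exists (c * d).
    by rewrite -scalerA -scalerBr; apply: A0Z.
  case: (classic (B m)) => [[d hd] _|nBm []]; last by split.
  have d0 : d != 0.
    by apply/eqP => d0; move: hd; rewrite d0 scale0r subr0.
  exists d^-1.
  have -> : x - d^-1 *: m = (- d^-1) *: (m - d *: x).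
    by rewrite scalerBr scalerA mulNr mulVf // scaleN1r opprK scaleNr addrC.
  exact: A0Z.
have uniq : forall x c c', A0 (x - c *: m) -> A0 (x - c' *: m) -> c = c'.
  move=> x c c' h1 h2; apply/eqP; apply/negP => /negP cc.
  have : A0 ((c' - c) *: m).
    have -> : (c' - c) *: m = (x - c *: m) + (-1) *: (x - c' *: m).
      by rewrite scaleN1r opprB scalerBl [RHS]addrC [RHS]addrA subrK.
    by apply: A0D => //; apply: A0Z.
  move=> /(A0Z (c' - c)^-1); rewrite scalerA mulVf ?scale1r //.
  by rewrite subr_eq0 eq_sym.
pose l x := epsilon (inhabits 0) (fun c => A0 (x - c *: m)).
have lP : forall x, A0 (x - l x *: m).
  by move=> x; exact: (epsilon_spec (inhabits 0) (fun c => A0 (x - c *: m)) (ex x)).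
exists l; split.
- move=> x y; apply: (uniq (x + y)); first exact: lP.
  have -> : x + y - (l x + l y) *: m = (x - l x *: m) + (y - l y *: m).
    by rewrite scalerDl opprD addrACA.
  by apply: A0D; apply: lP.
- move=> c x; apply: (uniq (c *: x)); first exact: lP.
  by rewrite -scalerA -scalerBr; apply: A0Z; apply: lP.
- apply: (uniq m); first exact: lP.
  by rewrite scale1r subrr.
Qed.
End Functional.

Lemma mlword_inj (K : choiceType) n (k : 'I_n -> K) : injective (mlword k).
Proof.
move=> s s' /word_inj e.
have := congr1 (map (fun x => x.2)) e; rewrite -!map_comp => /eq_in_map e'.
apply/permP => i; apply: val_inj.
have : i \in Finite.enum 'I_n by rewrite -enumT mem_enum.
by move/e' => /= -[].
Qed.

Lemma mlword_eq (K : choiceType) n (k : 'I_n -> K) s s' :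
  (mlword k s == mlword k s') = (s == s').
Proof. by apply/eqP/eqP => [/mlword_inj|->]. Qed.

Section CoefSum.
Variables (F : fieldType) (K : choiceType) (n : nat) (k : 'I_n -> K) (a : 'S_n -> F).

Lemma coef_sum_ml s0 :
  (\sum_(s : 'S_n) << a s *g mlword k s >> : FA F K)@_(mlword k s0) = a s0.
Proof.
rewrite mcoeff_sum (bigD1 s0) //= mcoeffU eqxx mulr1n big1 ?addr0 // => s ss0.
by rewrite mcoeffU mlword_eq (negbTE ss0).
Qed.

Lemma coef_sum_out w : (forall s, w <> mlword k s) ->
  (\sum_(s : 'S_n) << a s *g mlword k s >> : FA F K)@_w = 0.
Proof.
move=> hw; rewrite mcoeff_sum big1 // => s _; rewrite mcoeffU.
by case: eqP => // e; case: (hw s).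
Qed.
End CoefSum.

Lemma mlword_map (K1 K2 : choiceType) n (g : 'I_n -> K1) (f : K1 -> K2) (s : 'S_n) :
  [seq (f x.1, x.2) | x <- (mlword g s : seq _)] = mlword (fun i => f (g i)) s.
Proof. by rewrite /mlword /=; elim: (enum 'I_n) => //= i l ->. Qed.

Lemma LE_U3 (F : fieldType) (K : choiceType) (V : lmodType F) (B : K -> V) (k1 k2 k3 : K) :
  LE B (<< k1 >> - << k2 >> - << k3 >>) = B k1 - B k2 - B k3.
Proof. by rewrite !LEB !LEU !scale1r. Qed.

Section Tensor.
Variables (F : fieldType) (R C : lmodType F) (mulR : R -> R -> R) (mulC : C -> C -> C).

Lemma tmulUU (a a' : R) (b b' : C) :
  tmul mulR mulC << (a, b) >> << (a', b') >> = << (mulR a a', mulC b b') >>.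
Proof.
by rewrite /tmul !msuppU oner_eq0 !big_seq_fset1 /= !mcoeffU !eqxx !mulr1n mulr1.
Qed.

Variables (K1 K2 : choiceType) (phi : K1 * nat -> R) (psi : K2 * nat -> C).

Lemma evalw_tmul (G1 : choiceType) (Phi : G1 * nat -> TRep R C)
  (p1 : G1 -> K1) (p2 : G1 -> K2)
  (hPhi : forall x, Phi x = << (phi (p1 x.1, x.2), psi (p2 x.1, x.2)) >>)
  (w : seq (G1 * nat)) : w != [::] ->
  evalw (tmul mulR mulC) Phi w =
  << (evalw mulR phi [seq (p1 x.1, x.2) | x <- w],
      evalw mulC psi [seq (p2 x.1, x.2) | x <- w]) >>.
Proof.
case: w => [|x w] // _ /=; rewrite hPhi.
elim: w (phi (p1 x.1, x.2)) (psi (p2 x.1, x.2)) => [|y w IH] a b //=.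
by rewrite hPhi tmulUU IH.
Qed.
End Tensor.

Unset Implicit Arguments.
Local Close Scope fset_scope.

Theorem mainTheorem8
    (F : fieldType) (charF0 : [pchar F] =i pred0)
    (G : choiceType) (gop : G -> G -> G) (gone : G) (ginv : G -> G)
    (G_group : is_group gop gone ginv)
    (H : zmodType) (beta : H -> H -> F) (beta_bichar : skew_bicharacter beta)
    (C : lmodType F) (mulC : C -> C -> C) (Ch : H -> C -> Prop)
    (C_alg : is_algebra mulC) (C_graded : is_grading +%R mulC Ch)
    (C_betacomm : beta_commutative beta mulC Ch)
    (C_gen : generates_beta_variety beta mulC Ch)
    (R : lmodType F) (mulR : R -> R -> R) (Rg : G -> R -> Prop)
    (R_alg : is_algebra mulR) (R_graded : is_grading gop mulR Rg)
    (n : nat) (g : 'I_n -> G) (h : 'I_n -> H) (f : FA F (G * H)%type) :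
  tensor_graded_identity mulR mulC Rg Ch f ->
  in_P (fun i => (g i, h i)) f ->
  exists f0 : FA F G,
    [/\ in_P g f0, graded_identity mulR Rg f0 &
        f = phi_h g h (zeta_lambda beta h) f0].
Proof.
move=> [nf hev] hP.
pose al s := f@_(mlword (fun i => (g i, h i)) s).
pose lam s := zeta_lambda beta h s.
have lam0 : forall s, lam s != 0.
  by move=> s; case: (@zeta_spec _ _ _ beta_bichar _ h s).
pose f0 : FA F G := \sum_(s : 'S_n) << (al s / lam s) *g mlword g s >>.
have frepr : f = \sum_(s : 'S_n) << al s *g mlword (fun i => (g i, h i)) s >>.
  apply/malgP => w.
  case: (classic (exists s, w = mlword (fun i => (g i, h i)) s)) => [[s ->]|nw].
    by rewrite coef_sum_ml.
  rewrite coef_sum_out; last by move=> s e; apply: nw; exists s.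
  apply/eqP; rewrite mcoeff_eq0; apply/negP => win; apply: nw; exact: hP w win.
exists f0; split.
- move=> w win; case: (classic (exists s, w = mlword g s)) => // nw; exfalso.
  move: win; rewrite -mcoeff_neq0 coef_sum_out; first by rewrite eqxx.
  by move=> s e; apply: nw; exists s.
- split.
    rewrite /no_const.
    case: (classic (exists s, word [::] = mlword g s)) => [[s e]|ne].
      rewrite e coef_sum_ml.
      have en : enum 'I_n = [::].
        by move: (word_inj e) => /(congr1 size); rewrite size_map => /esym/size0nil.
      have -> : al s = 0 by rewrite /al /mlword en /=; exact: nf.
      by rewrite mul0r.
    by rewrite coef_sum_out // => s e; apply: ne; exists s.
  move=> phi gphi.
  have ef0 : evalp mulR phi f0 =
      \sum_(s : 'S_n) (al s / lam s) *: evalw mulR phi (mlword g s).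
    by rewrite evalpE LE_sum; apply: eq_bigr => s _; rewrite LEU.
  case: (posnP n) => [n0|n0].
    rewrite ef0 big1 // => s _.
    have en : enum 'I_n = [::] by apply/size0nil; rewrite size_enum_ord n0.
    by rewrite /mlword en /= scaler0.
  case: (eqVneq (evalp mulR phi f0) 0) => // nz; exfalso.
  have enn : enum 'I_n != [::] by rewrite -size_eq0 size_enum_ord -lt0n.
  pose mh := mlword h 1%g.
  have [psiC [gpsi nzC]] : exists psiC : H * nat -> C,
      (forall k i, Ch k (psiC (k, i))) /\ evalp mulC psiC << mh >> != 0.
    case: (classic (exists psiC : H * nat -> C,
      (forall k i, Ch k (psiC (k, i))) /\ evalp mulC psiC << mh >> != 0)) => [//|hne].
    exfalso; apply: (T_proper beta_bichar (h := h) n0); apply/C_gen; split.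
      rewrite /no_const mcoeffU1 /mh /mlword word_eq.
      by rewrite -size_eq0 size_map size_eq0 (negbTE enn).
    move=> psiC gpsi; case: (eqVneq (evalp mulC psiC << mh >>) 0) => // nzc.
    by exfalso; apply: hne; exists psiC.
  pose mC := evalw mulC psiC mh.
  have nzC' : mC != 0 by move: nzC; rewrite evalpE LEU scale1r.
  have hcs : forall s, evalw mulC psiC (mlword h s) = (lam s)^-1 *: mC.
    move=> s; have [l0 hz] := @zeta_spec _ _ _ beta_bichar _ h s.
    have [_ /(_ psiC gpsi)] := (proj2 (C_gen _)) hz.
    rewrite evalpE LE_UB => /eqP; rewrite subr_eq0 => /eqP e.
    by rewrite /mC e scalerA mulVf // scale1r.
  have [l [lD lZ lm]] := functional_ex nzC'.
  pose Phi := fun x : (G * H) * nat =>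
    (<< (phi (x.1.1, x.2), psiC (x.1.2, x.2)) >> : TRep R C).
  have hPhi : forall gh i, tensor_hom Rg Ch gh (Phi (gh, i)).
    move=> [a b] i u; rewrite msuppU oner_eq0 inE => /eqP -> /=.
    by split; [exact: gphi | exact: gpsi].
  have tz := hev Phi hPhi.
  pose Lt := LE (fun u : R * C => l u.2 *: u.1).
  have hLt : Lt (evalp (tmul mulR mulC) Phi f) = 0.
    apply: (tz (fun t => Lt t = 0)).
      split.
      - exact: LE0.
      - by move=> x y; rewrite /Lt LED => -> ->; rewrite addr0.
      - by move=> c x; rewrite /Lt LEZ => ->; rewrite scaler0.
    move=> x [[a [a' [b ->]]]|[[a [b [b' ->]]]|[[c [a [b ->]]]|[c [a [b ->]]]]]].
    - by rewrite /Lt LE_U3 /= scalerDr addrAC addrK subrr.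
    - by rewrite /Lt LE_U3 /= lD scalerDl addrAC addrK subrr.
    - by rewrite /Lt LE_UB /= !scalerA mulrC subrr.
    - by rewrite /Lt LE_UB /= lZ scalerA subrr.
  move: hLt; rewrite frepr evalpE LE_sum /Lt LE_sum.
  rewrite (eq_bigr (fun s => (al s / lam s) *: evalw mulR phi (mlword g s))).
    by move=> hLt; move: nz; rewrite ef0 hLt eqxx.
  move=> s _; rewrite LEU LEZ.
  have ne : (mlword (fun i => (g i, h i)) s : seq _) != [::].
    by rewrite /mlword /= -size_eq0 size_map size_eq0.
  have hP' : forall x, Phi x = << (phi (fst x.1, x.2), psiC (snd x.1, x.2)) >> by [].
  rewrite (evalw_tmul mulR mulC hP' ne).
  rewrite (mlword_map _ fst s) (mlword_map _ snd s) /=.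
  by rewrite LEU scale1r /= hcs lZ lm mulr1 scalerA.
- rewrite frepr /phi_h; apply: eq_bigr => s _.
  by rewrite coef_sum_ml mulrC divfK.
Qed.
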